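(* Let $m>1$ be an integer and $k$ an odd positive integer. Then $\mathrm{msum}(mk,k)\ge 1-\frac1m$.
   Context: For positive integers $n>k$, let $S_n$ be the set of permutations $\pi=(\pi_1,\dots,\pi_n)$ of $1,\dots,n$, with cyclic indexing $\pi_{n+i}=\pi_i$, and $s_i=\sum_{j=0}^{k-1}\pi_{i+j}$ for $i=1,\dots,n$. Define $\mathrm{msum}(\pi,k)=\max_{1\le i\le n}s_i-\frac{k(n+1)}{2}$ and $\mathrm{msum}(n,k)=\min_{\pi\in S_n}\mathrm{msum}(\pi,k)$. *)

(* Defs.v *)
From HB Require Import structures.
From mathcomp Require Import all_boot all_order all_fingroup all_algebra.
Set Implicit Arguments. Unset Strict Implicit. Unset Printing Implicit Defensive.
Import Order.TTheory GRing.Theory Num.Theory.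
Local Open Scope ring_scope.

(* A permutation pi of 1..n is represented by p : 'S_n (a permutation of
   {0,..,n-1}), with pi_{i+1} = p i + 1 (positions and values shifted by 1).
   Cyclic indexing: position (i + j) mod n. *)

Definition wsum (n : nat) (p : 'S_n) (k : nat) (i : nat) : nat :=
  (\sum_(j < k) (match (insub ((i + j) %% n) : option 'I_n) with
                | Some x => (p x : nat).+1
                | None => 0
                end))%N.

(* msum(pi,k) = max_i s_i - k(n+1)/2  (as a rational); the nat max has
   default 0, which is harmless since all s_i >= 0 and n > 0 in use. *)
Definition msum_perm (n : nat) (p : 'S_n) (k : nat) : rat :=
  ((\max_(i < n) wsum p k i)%N)%:R - (k * (n + 1))%:R / 2%:R.

(* msum(n,k) = min over all permutations; the identity permutation (a member
   of the range) serves as initial value of the fold, so this is the true min. *)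
Definition msum (n k : nat) : rat :=
  \big[Order.min/msum_perm (1 : 'S_n) k]_(p : 'S_n) msum_perm p k.

(* Main.v *)
Require Import Defs.
From mathcomp Require Import all_boot all_order all_fingroup all_algebra.
From mathcomp Require Import zify ring lra.
Import Order.TTheory GRing.Theory Num.Theory.

Lemma gauss2 (n : nat) : (2 * \sum_(i < n) i.+1 = n * n.+1)%N.
Proof.
elim: n => [|n IH]; first by rewrite big_ord0.
rewrite big_ord_recr /= mulnDr IH. lia.
Qed.

Lemma shift1 (N : nat) (G : nat -> nat) :
  (forall x, G (x + N) = G x)%N ->
  (\sum_(i < N) G (i + 1) = \sum_(i < N) G i)%N.
Proof.
case: N => [|N] hG; first by rewrite !big_ord0.
rewrite big_ord_recr big_ord_recl /=.
have -> : (N + 1 = 0 + N.+1)%N by lia.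
rewrite hG addnC; congr (_ + _)%N.
by apply: eq_bigr => i _; rewrite /bump /= addn1.
Qed.

Lemma shiftj (N j : nat) (G : nat -> nat) :
  (forall x, G (x + N) = G x)%N ->
  (\sum_(i < N) G (i + j) = \sum_(i < N) G i)%N.
Proof.
move=> hG; elim: j => [|j IH].
  by apply: eq_bigr => i _; rewrite addn0.
rewrite -IH -(@shift1 N (fun x => G (x + j))); last first.
  by move=> x; rewrite addnAC hG.
by apply: eq_bigr => i _; congr G; lia.
Qed.

Lemma sum_eq_le (N : nat) (a b : nat -> nat) :
  (forall i, i < N -> a i <= b i)%N ->
  (\sum_(i < N) a i = \sum_(i < N) b i)%N ->
  forall i, (i < N)%N -> a i = b i.
Proof.
move=> hle hs i hi.
have h0 : (\sum_(i < N) (b i - a i) == 0)%N.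
  by rewrite (@sumnB _ _ _ (fun i : 'I_N => a i) (fun i : 'I_N => b i)) ?hs ?subnn // => j _; apply: hle.
move: h0; rewrite sum_nat_eq0 => /forallP /(_ (Ordinal hi)) /= /eqP.
have := hle i hi. lia.
Qed.

Section Main.
Variables (m k : nat) (hm : (1 < m)%N) (hk : odd k) (p : 'S_(m * k)).
Let n := (m * k)%N.
Lemma k_pos : (0 < k)%N. Proof. by case: k hk. Qed.
Lemma n_pos : (0 < n)%N. Proof. rewrite /n muln_gt0 k_pos andbT; lia. Qed.

Definition F (x : nat) : nat := (p (Ordinal (ltn_pmod x n_pos))).+1.

Lemma F_mod x y : x %% n = y %% n -> F x = F y.
Proof. by move=> h; rewrite /F; congr (p _).+1; apply: val_inj. Qed.

Lemma F_inj x y : F x = F y -> x %% n = y %% n.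
Proof. rewrite /F => -[] /val_inj h; have := congr1 val (perm_inj h); done. Qed.

Definition s (x : nat) : nat := (\sum_(j < k) F (x + j))%N.

Lemma s_mod x : s x = s (x %% n).
Proof. by apply: eq_bigr => j _; apply: F_mod; rewrite modnDml. Qed.

Lemma wsum_s x : wsum p k x = s x.
Proof.
apply: eq_bigr => j _; rewrite insubT /=; first by rewrite ltn_pmod // n_pos.
move=> h; rewrite /F; congr (p _).+1; exact: val_inj.
Qed.

Lemma s_eqmod x y : x %% n = y %% n -> s x = s y.
Proof. by move=> h; rewrite s_mod h -s_mod. Qed.

Lemma stepA i : (s (i + 1) + F i = s i + F (i + k))%N.
Proof.
rewrite /s; case: k k_pos => // k' _.
rewrite big_ord_recr big_ord_recl /= addn0.
have -> : (\sum_(j < k') F (i + 1 + j) = \sum_(j < k') F (i + bump 0 j))%N.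
  by apply: eq_bigr => j _; congr F; rewrite /bump /=; lia.
have -> : F (i + 1 + k') = F (i + k'.+1) by congr F; lia.
by rewrite (addnC (F i)) addnAC.
Qed.

Lemma sumF : (2 * \sum_(i < n) F i = n * n.+1)%N.
Proof.
rewrite -gauss2; congr (2 * _)%N.
rewrite (eq_bigr (fun i : 'I_n => (p i).+1)); last first.
  by move=> i _; rewrite /F; congr (p _).+1; apply: val_inj => /=; rewrite modn_small.
by rewrite [RHS](reindex_inj (@perm_inj _ p)).
Qed.

Lemma sums : (\sum_(i < n) s i = k * \sum_(i < n) F i)%N.
Proof.
rewrite /s exchange_big /=.
rewrite (eq_bigr (fun _ => \sum_(i < n) F i)); last first.
  move=> j _; apply: shiftj => x; apply: F_mod; by rewrite modnDr.
by rewrite sum_nat_const card_ord.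
Qed.

Lemma sums1 : (\sum_(i < n) s (i + 1) = \sum_(i < n) s i)%N.
Proof. apply: shift1 => x; apply: s_eqmod; by rewrite modnDr. Qed.

Definition M := (\max_(i < n) s i)%N.

Lemma s_le i : (s i <= M)%N.
Proof. by rewrite s_mod; exact: (@leq_bigmax _ (fun j : 'I_n => s j) (Ordinal (ltn_pmod i n_pos))). Qed.

Lemma s_neq i : s i <> s (i + 1).
Proof.
move=> e; have := stepA i; rewrite -e => /eqP; rewrite eqn_add2l => /eqP /F_inj.
rewrite -{1}(addn0 i) => /eqP; rewrite eqn_modDl mod0n modn_small.
  by have := k_pos; case: (k).
by rewrite /n; have := k_pos; nia.
Qed.

Lemma sum_pairs : (\sum_(i < n) (s i + s (i + 1) + 1) = n * (k * n.+1 + 1))%N.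
Proof.
rewrite !big_split /= sums1 sums sum_nat_const card_ord.
have := sumF; set S := (\sum_(i < n) F i)%N; nia.
Qed.

Lemma bound1 : (k * n.+1 + 1 <= 2 * M)%N.
Proof.
have h : (n * (k * n.+1 + 1) <= n * (2 * M))%N.
  rewrite -sum_pairs -[X in (_ <= X * _)%N]card_ord -sum_nat_const.
  apply: leq_sum => i _; have := s_le i; have := s_le (i + 1); have := s_neq i; lia.
by rewrite leq_pmul2l ?n_pos in h.
Qed.

Lemma no_tight : (2 < m)%N -> (2 * M)%N <> (k * n.+1 + 1)%N.
Proof.
move=> hm3 hM.
have hall : forall i, (i < n)%N -> (s i + s (i + 1) + 1 = 2 * M)%N.
  apply: sum_eq_le.
    by move=> i _; have := s_le i; have := s_le (i + 1); have := s_neq i; lia.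
  by rewrite sum_pairs sum_nat_const card_ord hM.
have hall' : forall i, (s i + s (i + 1) + 1 = 2 * M)%N.
  move=> i; rewrite (s_mod i) (@s_eqmod (i + 1) (i %% n + 1)); last by rewrite modnDml.
  by apply: hall; rewrite ltn_pmod // n_pos.
have P : forall x, (F x + F (x + 1) = F (x + k) + F (x + k + 1))%N.
  move=> x; have h1 := stepA x; have h2 := stepA (x + 1).
  have h3 := hall' x; have h4 := hall' (x + 1).
  rewrite (addnAC x 1 k) in h2.
  set a := s x in h1 h3; set b := s (x + 1) in h1 h2 h3 h4; set c := s (x + 1 + 1) in h2 h4.
  lia.
pose j := k./2.
have kj : k = j.*2.+1 by rewrite /j -{1}(odd_double_half k) hk add1n.
have Q : forall t, (F (0 + 0) + F (0 + t.*2.+1) = F (0 + k + 0) + F (0 + k + t.*2.+1))%N.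
  have P' : forall x, (F (0 + x) + F (0 + (x + 1)) = F (0 + k + x) + F (0 + k + (x + 1)))%N.
    move=> x; rewrite !add0n addnA (addnC k x); exact: P.
  elim=> [|t IH]; first by have := P' 0; rewrite !addn0.
  have h1 := P' t.*2.+1; have h2 := P' t.*2.+2.
  rewrite !addn1 in h1 h2; rewrite doubleS.
  lia.
have := Q j; rewrite -kj !addn0 !add0n => e; have : F 0 = F (k + k) by lia.
move=> /F_inj.
rewrite mod0n modn_small; first by have := k_pos; lia.
by rewrite /n; have := k_pos; nia.
Qed.

End Main.

Local Open Scope ring_scope.
Lemma per_perm (m k : nat) (hm : (1 < m)%N) (hk : odd k) (p : 'S_(m * k)) :
  1 - (m%:R)^-1 <= msum_perm p k :> rat.
Proof.
rewrite /msum_perm (eq_bigr (fun i : 'I_(m * k) => s m k hm hk p i)); last first.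
  by move=> i _; rewrite wsum_s.
have -> : (\max_(i < m * k) s m k hm hk p i)%N = M m k hm hk p by [].
set MM := M m k hm hk p.
have key : (k * (m * k + 1) * m + 2 * m <= 2 * m * MM + 2)%N.
  have b := bound1 m k hm hk p; rewrite -/MM in b.
  have [e2|ne2] := eqVneq m 2.
    rewrite e2 in b *; nia.
  have hm3 : (2 < m)%N by lia.
  have := no_tight m k hm hk p hm3; rewrite -/MM => nt.
  have b2 : (k * (m * k).+1 + 2 <= 2 * MM)%N by lia.
  nia.
have keyR : (k * (m * k + 1) * m + 2 * m)%:R <= (2 * m * MM + 2)%:R :> rat by rewrite ler_nat.
rewrite !natrD !natrM in keyR.
have mpos : 0 < m%:R :> rat by rewrite ltr0n; lia.
rewrite -subr_ge0.
have -> : MM%:R - (k * (m * k + 1))%:R / 2%:R - (1 - m%:R^-1) =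
   ((2 * m * MM + 2)%:R - (k * (m * k + 1) * m + 2 * m)%:R) / (2 * m%:R) :> rat.
  rewrite !natrD !natrM; field; by rewrite lt0r_neq0.
apply: divr_ge0; last by lra.
rewrite !natrD !natrM subr_ge0; lra.
Qed.

Theorem lemma5p2 (m k : nat) (hm : (1 < m)%N) (hk : odd k) :
  1 - (m%:R)^-1 <= msum (m * k) k :> rat.
Proof.
rewrite /msum; elim/big_ind: _ => //.
- exact: per_perm.
- by move=> x y hx hy; rewrite le_min hx hy.
- by move=> q _; exact: per_perm.
Qed.
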